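(* Let $r_0>0$, $\eta>0$, and let $C_0\subset\mathbb{R}^2$ be the circle of radius $r_0$ centered at the origin, taken as the data set. For $r>0$ let $C_r$ be the circle of radius $r$ centered at the origin, and for $s\in\{1,2\}$ consider $$E_s(C_r)=\left(\int_{C_r} d(\mathbf{x})^{s}\, d\sigma\right)^{1/s}+\eta \left(\int_{C_r} |\kappa(\mathbf{x})|^{s}\,d\sigma\right)^{1/s}=(2\pi)^{1/s}\left(|r-r_0|\,r^{1/s}+\eta\, r^{1/s-1}\right),$$ where $d(\mathbf{x})$ is the distance from $\mathbf{x}$ to $C_0$ (so $d=|r-r_0|$ on $C_r$) and $\kappa=1/r$ is the curvature of $C_r$. Then, viewing $E_s(C_r)$ as a function of $r>0$: (i) for $s=1$, $r=r_0$ is a local minimizer of $E_1(C_r)$ for every $\eta>0$; (ii) for $s=2$, $r=r_0$ is a local minimizer of $E_2(C_r)$ if $\eta\le 2r_0^2$, and $r=\big(r_0+\sqrt{r_0^2+12\eta}\big)/6$ is a local minimizer of $E_2(C_r)$ if $\eta>2r_0^2$.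
   Context: $d\sigma$ denotes arc length on the circle. The energy is the paper's curvature-regularized reconstruction energy $E_s(\Gamma)=(\int_\Gamma |d|^s d\sigma)^{1/s}+\eta(\int_\Gamma|\kappa|^s d\sigma)^{1/s}$ restricted to circles concentric with the data circle. *)

(* Defs.v *)
From Stdlib Require Import Reals Lra.
From Coquelicot Require Import Coquelicot.
Open Scope R_scope.

Definition norm2 (x : R * R) : R := sqrt (fst x ^ 2 + snd x ^ 2).

Definition dist_C0 (r0 : R) (x : R * R) : R := Rabs (norm2 x - r0).

Definition gamma (r t : R) : R * R := (r * cos t, r * sin t).
Definition speed (r t : R) : R :=
  sqrt ((Derive (fun u => r * cos u) t) ^ 2 + (Derive (fun u => r * sin u) t) ^ 2).

Definition circ_integral (r : R) (f : R * R -> R) : R :=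
  RInt (fun t => f (gamma r t) * speed r t) 0 (2 * PI).

Definition curv_circle (r : R) (x : R * R) : R := / r.

Definition sroot (s : nat) (y : R) : R :=
  if Rle_dec y 0 then 0 else Rpower y (/ INR s).

Definition E_s (s : nat) (eta r0 r : R) : R :=
  sroot s (circ_integral r (fun x => Rabs (dist_C0 r0 x) ^ s))
  + eta * sroot s (circ_integral r (fun x => Rabs (curv_circle r x) ^ s)).

Definition local_minimizer_pos (g : R -> R) (rs : R) : Prop :=
  0 < rs /\ exists delta, 0 < delta /\
    forall r, 0 < r -> Rabs (r - rs) < delta -> g rs <= g r.

(* Main.v *)
Require Import Defs.
From Stdlib Require Import Reals Lra Psatz.
From Coquelicot Require Import Coquelicot.
Open Scope R_scope.

Lemma speed_eq r t : 0 < r -> speed r t = r.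
Proof.
  intro Hr. unfold speed.
  replace (Derive (fun u => r * cos u) t) with (- r * sin t) by (symmetry; apply is_derive_unique; auto_derive; auto; ring).
  replace (Derive (fun u => r * sin u) t) with (r * cos t) by (symmetry; apply is_derive_unique; auto_derive; auto; ring).
  replace ((- r * sin t) ^ 2 + (r * cos t) ^ 2) with (r ^ 2 * (sin t ^2 + cos t ^2)) by ring.
  rewrite <- !Rsqr_pow2, sin2_cos2, Rmult_1_r, Rsqr_pow2. apply sqrt_pow2; lra.
Qed.

Lemma norm_gamma r t : 0 < r -> norm2 (gamma r t) = r.
Proof.
  intro Hr. unfold norm2, gamma; simpl fst; simpl snd.
  replace ((r * cos t) ^ 2 + (r * sin t) ^ 2) with (r ^ 2 * (sin t ^2 + cos t ^2)) by ring.
  rewrite <- !Rsqr_pow2, sin2_cos2, Rmult_1_r, Rsqr_pow2. apply sqrt_pow2; lra.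
Qed.

Lemma circ_const r f c : 0 < r -> (forall t, f (gamma r t) = c) ->
  circ_integral r f = 2 * PI * (c * r).
Proof.
  intros Hr H. unfold circ_integral.
  rewrite (RInt_ext _ (fun _ => c * r)).
  - rewrite RInt_const. unfold scal; simpl; unfold mult; simpl. ring.
  - intros x _. rewrite H, speed_eq; auto.
Qed.

Lemma E1_eq eta r0 r : 0 < r -> E_s 1 eta r0 r = 2 * PI * (Rabs (r - r0) * r) + eta * (2 * PI).
Proof.
  intro Hr. unfold E_s.
  rewrite (circ_const r _ (Rabs (r - r0))); auto.
  2: { intro t. unfold dist_C0. rewrite norm_gamma by auto. rewrite Rabs_Rabsolu. ring. }
  rewrite (circ_const r _ (/ r)); auto.
  2: { intro t. unfold curv_circle. rewrite Rabs_pos_eq. ring. left; apply Rinv_0_lt_compat; auto. }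
  unfold sroot. replace (/ INR 1) with 1 by (simpl; field).
  pose proof PI_RGT_0.
  rewrite Rinv_l by lra.
  destruct (Rle_dec (2 * PI * 1) 0) as [h|h]; [lra|].
  rewrite (Rpower_1 (2*PI*1)) by lra.
  destruct (Rle_dec (2 * PI * (Rabs (r - r0) * r)) 0) as [h2|h2].
  - assert (Rabs (r - r0) * r >= 0) by (pose proof (Rabs_pos (r - r0)); nra).
    assert (2 * PI * (Rabs (r - r0) * r) = 0) by nra. rewrite H1. field_simplify. ring.
  - rewrite Rpower_1 by lra. field.
Qed.

Lemma sroot2 y : 0 <= y -> sroot 2 y = sqrt y.
Proof.
  intro Hy. unfold sroot. replace (/ INR 2) with (/ 2) by (simpl; field).
  destruct (Rle_dec y 0).
  - replace y with 0 by lra. now rewrite sqrt_0.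
  - apply Rpower_sqrt; lra.
Qed.

Lemma E2_eq eta r0 u : 0 < u ->
  E_s 2 eta r0 (u * u) = sqrt (2 * PI) * (Rabs (u * u - r0) * u + eta / u).
Proof.
  intro Hu. assert (Hr : 0 < u * u) by nra. pose proof PI_RGT_0.
  unfold E_s.
  rewrite (circ_const (u*u) _ (Rabs (u*u - r0) ^ 2)); auto.
  2: { intro t. unfold dist_C0. rewrite norm_gamma by auto. rewrite Rabs_Rabsolu. ring. }
  rewrite (circ_const (u*u) _ ((/ (u*u)) ^ 2)); auto.
  2: { intro t. unfold curv_circle. rewrite Rabs_pos_eq. ring. left; apply Rinv_0_lt_compat; auto. }
  rewrite !sroot2.
  2: { apply Rmult_le_pos; [lra|]. apply Rmult_le_pos; [|lra]. apply pow_le. left; apply Rinv_0_lt_compat; auto. }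
  2: { apply Rmult_le_pos; [lra|]. apply Rmult_le_pos; [|lra]. apply pow_le. apply Rabs_pos. }
  replace (2 * PI * (Rabs (u * u - r0) ^ 2 * (u * u))) with (2 * PI * (Rabs (u * u - r0) * u) ^ 2) by ring.
  replace (2 * PI * ((/ (u * u)) ^ 2 * (u * u))) with (2 * PI * (/ u) ^ 2) by (field; lra).
  rewrite !sqrt_mult_alt by lra.
  rewrite !sqrt_pow2.
  - unfold Rdiv. ring.
  - left; apply Rinv_0_lt_compat; auto.
  - apply Rmult_le_pos; [apply Rabs_pos | lra].
Qed.

Lemma helpA a u eta : 0 < a -> 0 < u -> 0 < eta -> eta <= 2 * (a * a) ^ 2 ->
  Rabs (a * a - a * a) * a + eta / a <= Rabs (u * u - a * a) * u + eta / u.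
Proof.
  intros Ha Hu He Hle.
  replace (a * a - a * a) with 0 by ring. rewrite Rabs_R0.
  destruct (Rle_lt_dec a u) as [h|h].
  - rewrite Rabs_pos_eq by nra.
    assert (Hk : (u * u - a * a) * u + eta / u - (0 * a + eta / a)
              = (u - a) * (u * u * a * (u + a) - eta) / (u * a)) by (field; lra).
    assert (0 <= (u - a) * (u * u * a * (u + a) - eta) / (u * a)); [|lra].
    apply Rmult_le_pos; [| left; apply Rinv_0_lt_compat; nra].
    apply Rmult_le_pos; [lra|].
    assert (u * u * a * (u + a) >= a * a * a * (a + a)).
    { assert (u*u >= a*a) by nra. assert (u*u*a >= a*a*a) by nra. nra. }
    nra.
  - pose proof (Rabs_pos (u * u - a * a)).
    assert (eta / a <= eta / u).
    { unfold Rdiv. apply Rmult_le_compat_l; [lra|]. apply Rinv_le_contravar; lra. }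
    nra.
Qed.

Lemma helpB a u eta r0 : 0 < a -> 0 < u -> 0 < r0 -> eta = 3 * (a*a)^2 - (a*a) * r0 ->
  a * a > r0 -> u * u > r0 ->
  Rabs (a * a - r0) * a + eta / a <= Rabs (u * u - r0) * u + eta / u.
Proof.
  intros Ha Hu Hr0 He H1 H2.
  rewrite !Rabs_pos_eq by lra.
  assert (Hk : (u * u - r0) * u + eta / u - ((a * a - r0) * a + eta / a)
     = (u - a) ^ 2 * (u * u + 2 * a * u + 3 * a * a - r0) / u) by (subst eta; field; lra).
  assert (0 <= (u - a) ^ 2 * (u * u + 2 * a * u + 3 * a * a - r0) / u); [|lra].
  apply Rmult_le_pos; [| left; apply Rinv_0_lt_compat; nra].
  apply Rmult_le_pos; [apply pow2_ge_0 | nra].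
Qed.

Theorem proposition2 (r0 eta : R) (Hr0 : 0 < r0) (Heta : 0 < eta) :
  local_minimizer_pos (E_s 1 eta r0) r0 /\
  (eta <= 2 * r0 ^ 2 -> local_minimizer_pos (E_s 2 eta r0) r0) /\
  (eta > 2 * r0 ^ 2 ->
     local_minimizer_pos (E_s 2 eta r0) ((r0 + sqrt (r0 ^ 2 + 12 * eta)) / 6)).
Proof.
  pose proof PI_RGT_0.
  assert (Hs : 0 < sqrt (2 * PI)) by (apply sqrt_lt_R0; lra).
  split; [|split].
  - split; auto. exists 1. split; [lra|]. intros r Hr _.
    rewrite !E1_eq by auto. replace (r0 - r0) with 0 by ring. rewrite Rabs_R0.
    pose proof (Rabs_pos (r - r0)). assert (0 <= Rabs (r - r0) * r) by nra. assert (0 <= 2 * PI * (Rabs (r - r0) * r)) by nra. nra.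
  - intro Hle. split; auto. exists 1. split; [lra|]. intros r Hr _.
    set (a := sqrt r0). assert (Ha : r0 = a * a) by (symmetry; apply sqrt_sqrt; lra).
    assert (Ha0 : 0 < a) by (apply sqrt_lt_R0; lra).
    set (u := sqrt r). assert (Hu : r = u * u) by (symmetry; apply sqrt_sqrt; lra).
    assert (Hu0 : 0 < u) by (apply sqrt_lt_R0; lra).
    replace (E_s 2 eta r0 r0) with (E_s 2 eta r0 (a * a)) by (rewrite <- Ha; auto).
    rewrite Hu, !E2_eq by auto.
    apply Rmult_le_compat_l; [lra|].
    rewrite Ha. apply helpA; auto. rewrite <- Ha. lra.
  - intro Hgt.
    set (S := sqrt (r0 ^ 2 + 12 * eta)).
    assert (HS2 : S * S = r0 ^ 2 + 12 * eta) by (apply sqrt_sqrt; nra).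
    assert (HS0 : 0 <= S) by apply sqrt_pos.
    set (rs := (r0 + S) / 6).
    assert (Hrs : rs > r0) by (unfold rs; nra).
    split; [lra|]. exists (rs - r0). split; [lra|]. intros r Hr Hd.
    assert (Hrr : r > r0) by (apply Rabs_def2 in Hd; lra).
    set (a := sqrt rs). assert (Ha : rs = a * a) by (symmetry; apply sqrt_sqrt; lra).
    assert (Ha0 : 0 < a) by (apply sqrt_lt_R0; lra).
    set (u := sqrt r). assert (Hu : r = u * u) by (symmetry; apply sqrt_sqrt; lra).
    assert (Hu0 : 0 < u) by (apply sqrt_lt_R0; lra).
    rewrite Ha, Hu, !E2_eq by auto.
    apply Rmult_le_compat_l; [lra|].
    apply helpB; auto; try lra.
    rewrite <- Ha. unfold rs. nra.
Qed.
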